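(* Let $G$ be a Lie group, $H\subseteq G$ a closed subgroup, and $\mathfrak{g}=\mathfrak{h}\oplus\mathfrak{m}$ a reductive decomposition. Equip $G/H$ with a $G$-invariant Riemannian metric (an $\mathrm{Ad}(H)$-invariant inner product $\langle\cdot,\cdot\rangle$ on $\mathfrak{m}$) with Levi-Civita connection $\nabla$. If $G/H$ admits a $G$-invariant Codazzi tensor field $A$ with $\nabla A\neq 0$, then the difference sectional curvature $K^d$ takes both positive and negative values, i.e. there are $2$-planes $\Pi,\Pi'\subseteq\mathfrak{m}$ with $K^d(\Pi)>0$ and $K^d(\Pi')<0$.
   Context: A reductive decomposition means $\mathfrak{m}$ is an $\mathrm{Ad}(H)$-invariant vector space complement of $\mathfrak{h}$ in $\mathfrak{g}$; $[X,Y]_{\mathfrak{m}}$ and $[X,Y]_{\mathfrak{h}}$ are the components of $[X,Y]$ in $\mathfrak{g}=\mathfrak{h}\oplus\mathfrak{m}$, and $\mathfrak{m}\cong T_{eH}(G/H)$. $G$-invariant tensor fields correspond to $\mathrm{Ad}(H)$-invariant tensors on $\mathfrak{m}$. A Codazzi tensor field is a symmetric twice-covariant tensor field $A$ with $(\nabla_XA)(Y,Z)=(\nabla_YA)(X,Z)$ for all vector fields. The Levi-Civita product $\alpha:\mathfrak{m}\times\mathfrak{m}\to\mathfrak{m}$ is defined by $2\langle\alpha(X,Y),Z\rangle=\langle[X,Y]_{\mathfrak{m}},Z\rangle-\langle X,[Y,Z]_{\mathfrak{m}}\rangle-\langle[X,Z]_{\mathfrak{m}},Y\rangle$. The Riemann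 curvature of the metric at $eH$ is $R(X,Y)Z=\alpha(X,\alpha(Y,Z))-\alpha(Y,\alpha(X,Z))-\alpha([X,Y]_{\mathfrak{m}},Z)-[[X,Y]_{\mathfrak{h}},Z]$, and the curvature of the canonical connection of the second kind $\nabla^0$ (the $G$-invariant connection corresponding to the zero product on $\mathfrak{m}$) is $R^0(X,Y)Z=-[[X,Y]_{\mathfrak{h}},Z]$, for $X,Y,Z\in\mathfrak{m}$. The difference curvature tensor is $R^d=R-R^0$, i.e. $R^d(X,Y)Z=\alpha(X,\alpha(Y,Z))-\alpha(Y,\alpha(X,Z))-\alpha([X,Y]_{\mathfrak{m}},Z)$. For a $2$-plane $\Pi\subseteq\mathfrak{m}$ with orthonormal basis $\{X,Y\}$, $K^d(\Pi)=\langle R^d(X,Y)Y,X\rangle=K(\Pi)-K^0(\Pi)$, where $K$ is the sectional curvature of the metric and $K^0(\Pi)=\langle R^0(X,Y)Y,X\rangle$ (independent of the orthonormal basis). *)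

(* Defs.v *)
(* Algebraic (infinitesimal) model of a reductive
   homogeneous space G/H: everything is expressed at the origin eH through
   the reductive decomposition g = h (+) m, as in the paper's setting. *)
From HB Require Import structures.
From mathcomp Require Import all_boot all_order all_algebra.
From mathcomp Require Import reals.

Set Implicit Arguments.
Unset Strict Implicit.
Unset Printing Implicit Defensive.

Import Order.TTheory GRing.Theory Num.Theory.
Local Open Scope ring_scope.

Section HomogeneousDefs.
Variables (R : realType) (g : vectType R).

Definition lie_bracket (br : g -> g -> g) : Prop :=
  [/\ (forall a x y z, br (a *: x + y) z = a *: br x z + br y z),
      (forall a x y z, br z (a *: x + y) = a *: br z x + br z y),
      (forall x, br x x = 0) &
      (forall x y z, br x (br y z) + br y (br z x) + br z (br x y) = 0)].

(* ---------- the decomposition g = h (+) m, given by the projection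
   ph : g -> g onto h along m ---------- *)
Definition in_h (ph : g -> g) (x : g) : Prop := ph x = x.
Definition in_m (ph : g -> g) (x : g) : Prop := ph x = 0.
Definition mpart (ph : g -> g) (x : g) : g := x - ph x.

Definition reductive_decomposition (br : g -> g -> g) (ph : g -> g) : Prop :=
  [/\ (forall a x y, ph (a *: x + y) = a *: ph x + ph y),
      (forall x, ph (ph x) = ph x),
      (forall U V, in_h ph U -> in_h ph V -> in_h ph (br U V)) &
      (forall U X, in_h ph U -> in_m ph X -> in_m ph (br U X))].

Definition bilinear_on_m (ph : g -> g) (B : g -> g -> R) : Prop :=
  forall a x y z, in_m ph x -> in_m ph y -> in_m ph z ->
    B (a *: x + y) z = a * B x z + B y z /\ B z (a *: x + y) = a * B z x + B z y.

Definition symmetric_on_m (ph : g -> g) (B : g -> g -> R) : Prop :=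
  forall x y, in_m ph x -> in_m ph y -> B x y = B y x.

Definition adh_invariant (br : g -> g -> g) (ph : g -> g) (B : g -> g -> R) : Prop :=
  forall U x y, in_h ph U -> in_m ph x -> in_m ph y ->
    B (br U x) y + B x (br U y) = 0.

(* G-invariant Riemannian metric = ad(h)-invariant inner product on m *)
Definition invariant_inner_product br ph (ip : g -> g -> R) : Prop :=
  [/\ bilinear_on_m ph ip, symmetric_on_m ph ip,
      (forall x, in_m ph x -> x != 0 -> 0 < ip x x) &
      adh_invariant br ph ip].

Definition levi_civita_product br ph (ip : g -> g -> R) (alpha : g -> g -> g) : Prop :=
  (forall X Y, in_m ph X -> in_m ph Y -> in_m ph (alpha X Y)) /\
  (forall X Y Z, in_m ph X -> in_m ph Y -> in_m ph Z ->
     2 * ip (alpha X Y) Z =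
       ip (mpart ph (br X Y)) Z - ip X (mpart ph (br Y Z))
       - ip (mpart ph (br X Z)) Y).

(* Covariant derivative at eH of a G-invariant (0,2)-tensor A for the
   invariant connection with Nomizu product alpha:
   (nabla_X A)(Y,Z) = - A(alpha(X,Y),Z) - A(Y,alpha(X,Z)). *)
Definition nablaA (alpha : g -> g -> g) (A : g -> g -> R) (X Y Z : g) : R :=
  - A (alpha X Y) Z - A Y (alpha X Z).

Definition invariant_codazzi br ph alpha (A : g -> g -> R) : Prop :=
  [/\ bilinear_on_m ph A, symmetric_on_m ph A, adh_invariant br ph A &
      (forall X Y Z, in_m ph X -> in_m ph Y -> in_m ph Z ->
         nablaA alpha A X Y Z = nablaA alpha A Y X Z)].

Definition nablaA_nonzero ph alpha (A : g -> g -> R) : Prop :=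
  exists X Y Z, [/\ in_m ph X, in_m ph Y, in_m ph Z & nablaA alpha A X Y Z != 0].

Definition Rd br ph (alpha : g -> g -> g) (X Y Z : g) : g :=
  alpha X (alpha Y Z) - alpha Y (alpha X Z) - alpha (mpart ph (br X Y)) Z.

Definition Kd br ph (ip : g -> g -> R) alpha (X Y : g) : R :=
  ip (Rd br ph alpha X Y Y) X.

Definition orthonormal_pair ph (ip : g -> g -> R) (X Y : g) : Prop :=
  [/\ in_m ph X, in_m ph Y, ip X X = 1, ip Y Y = 1 & ip X Y = 0].

End HomogeneousDefs.

(* Main.v *)
Require Import Defs.
From HB Require Import structures.
From mathcomp Require Import all_boot all_order all_algebra.
From mathcomp Require Import reals.
From mathcomp Require Import classical_sets boolp functions topology normedtype derive.
From mathcomp Require Import ring lra.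
Import Order.TTheory GRing.Theory Num.Theory.
Import numFieldNormedType.Exports.
Local Open Scope classical_set_scope.
Local Open Scope ring_scope.
Import VectorInternalTheory.

Lemma quad_helper (R : realFieldType) (a b : R) :
  (forall t, t * a + t * t * b <= 0) -> a = 0.
Proof.
move=> H; set c := `|b| + 1.
have c0 : 0 < c by rewrite /c ltr_pwDr ?normr_ge0.
have cb : 1 <= c + b by have := ler_norm (- b); rewrite normrN /c; lra.
have := H (a / c); set t := a / c => h.
have tc : a = t * c by rewrite /t divfK // lt0r_neq0.
rewrite tc in h *.
have : t * t * (c + b) <= 0 by rewrite mulrDr; lra.
move=> h2; have : t * t <= 0 by nra.
move=> h3; have -> : t = 0 by nra.
by rewrite mul0r.
Qed.
Lemma fin_min (R : realType) (I : finType) (P : pred I) (F : I -> R) (i0 : I) :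
  P i0 -> exists2 i, P i & forall j, P j -> F i <= F j.
Proof. by move=> Pi0; case: (arg_minP F Pi0) => i Pi H; exists i. Qed.
Lemma fin_max (R : realType) (I : finType) (P : pred I) (F : I -> R) (i0 : I) :
  P i0 -> exists2 i, P i & forall j, P j -> F j <= F i.
Proof. by move=> Pi0; case: (arg_maxP F Pi0) => i Pi H; exists i. Qed.

Section RayleighMax.
Variables (R : realType) (g : vectType R) (Q P : g -> g -> R).
Hypothesis HQl : forall a x y z, Q (a *: x + y) z = a * Q x z + Q y z.
Hypothesis HQr : forall a x y z, Q z (a *: x + y) = a * Q z x + Q z y.
Hypothesis HPl : forall a x y z, P (a *: x + y) z = a * P x z + P y z.
Hypothesis HPr : forall a x y z, P z (a *: x + y) = a * P z x + P z y.
Hypothesis HPpos : forall v, v != 0 -> 0 < P v v.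

Lemma rm_Q0l z : Q 0 z = 0.
Proof. have := HQl 1 0 0 z; rewrite scale1r addr0; lra. Qed.
Lemma rm_Q0r z : Q z 0 = 0.
Proof. have := HQr 1 0 0 z; rewrite scale1r addr0; lra. Qed.
Lemma rm_P0l z : P 0 z = 0.
Proof. have := HPl 1 0 0 z; rewrite scale1r addr0; lra. Qed.
Lemma rm_P0r z : P z 0 = 0.
Proof. have := HPr 1 0 0 z; rewrite scale1r addr0; lra. Qed.

Lemma rm_Qscale s x : Q (s *: x) (s *: x) = s * s * Q x x.
Proof.
have := HQl s x 0 (s *: x); rewrite addr0 rm_Q0l addr0 => ->.
have := HQr s x 0 x; rewrite addr0 rm_Q0r addr0 => ->.
by rewrite mulrA.
Qed.
Lemma rm_Pscale s x : P (s *: x) (s *: x) = s * s * P x x.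
Proof.
have := HPl s x 0 (s *: x); rewrite addr0 rm_P0l addr0 => ->.
have := HPr s x 0 x; rewrite addr0 rm_P0r addr0 => ->.
by rewrite mulrA.
Qed.

Lemma rm_Qsuml (I : Type) (r : seq I) (a : I -> R) (v : I -> g) z :
  Q (\sum_(i <- r) a i *: v i) z = \sum_(i <- r) a i * Q (v i) z.
Proof.
apply: (big_rec2 (fun x y => Q x z = y)) => [|i x y _ <-]; first exact: rm_Q0l.
by rewrite HQl.
Qed.
Lemma rm_Qsumr (I : Type) (r : seq I) (a : I -> R) (v : I -> g) z :
  Q z (\sum_(i <- r) a i *: v i) = \sum_(i <- r) a i * Q z (v i).
Proof.
apply: (big_rec2 (fun x y => Q z x = y)) => [|i x y _ <-]; first exact: rm_Q0r.
by rewrite HQr.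
Qed.
Lemma rm_Psuml (I : Type) (r : seq I) (a : I -> R) (v : I -> g) z :
  P (\sum_(i <- r) a i *: v i) z = \sum_(i <- r) a i * P (v i) z.
Proof.
apply: (big_rec2 (fun x y => P x z = y)) => [|i x y _ <-]; first exact: rm_P0l.
by rewrite HPl.
Qed.
Lemma rm_Psumr (I : Type) (r : seq I) (a : I -> R) (v : I -> g) z :
  P z (\sum_(i <- r) a i *: v i) = \sum_(i <- r) a i * P z (v i).
Proof.
apply: (big_rec2 (fun x y => P z x = y)) => [|i x y _ <-]; first exact: rm_P0r.
by rewrite HPr.
Qed.

Local Notation n := (dim g).
Let vb (i : 'I_n) : g := r2v (delta_mx 0 i : 'rV[R]_n).

Lemma rm_r2v (x : 'rV[R]_n) : r2v x = \sum_i x 0 i *: vb i.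
Proof.
rewrite {1}(row_sum_delta x) linear_sum; apply: eq_bigr => i _.
by rewrite linearZ.
Qed.

Definition rm_quad (F : g -> g -> R) (x : 'rV[R]_n) :=
  \sum_i \sum_j (x 0 i * x 0 j) * F (vb i) (vb j).

Lemma rm_qE x : Q (r2v x) (r2v x) = rm_quad Q x.
Proof.
rewrite rm_r2v rm_Qsuml /rm_quad; apply: eq_bigr => i _.
rewrite rm_Qsumr mulr_sumr; apply: eq_bigr => j _.
by rewrite mulrA.
Qed.
Lemma rm_pE x : P (r2v x) (r2v x) = rm_quad P x.
Proof.
rewrite rm_r2v rm_Psuml /rm_quad; apply: eq_bigr => i _.
rewrite rm_Psumr mulr_sumr; apply: eq_bigr => j _.
by rewrite mulrA.
Qed.

Lemma rm_cont_sum (I : Type) (s : seq I) (F : I -> 'rV[R]_n -> R) :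
  (forall i, continuous (F i)) -> continuous (fun x => \sum_(i <- s) F i x).
Proof.
move=> HF; elim: s => [|i s IH].
  have -> : (fun x => \sum_(i <- [::]) F i x) = (fun=> 0).
    by apply: funext => x; rewrite big_nil.
  exact: cst_continuous.
have -> : (fun x => \sum_(j <- i :: s) F j x) = (F i \+ (fun x => \sum_(j <- s) F j x)).
  by apply: funext => x; rewrite big_cons.
by move=> x; apply: continuousD; [exact: HF | exact: IH].
Qed.

Lemma rm_quad_cont F : continuous (rm_quad F).
Proof.
apply: rm_cont_sum => i; apply: rm_cont_sum => j x.
apply: (continuousM (s := fun x : 'rV[R]_n => x 0 i * x 0 j) (t := fun=> F (vb i) (vb j))).
  apply: (continuousM (s := fun x : 'rV[R]_n => x 0 i) (t := fun x : 'rV[R]_n => x 0 j)).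
    exact: coord_continuous.
  exact: coord_continuous.
exact: cst_continuous.
Qed.


Lemma rayleigh_max : (exists w : g, w != 0) ->
  exists v0 : g, v0 != 0 /\ forall v, Q v v * P v0 v0 <= Q v0 v0 * P v v.
Proof.
move=> [w w0].
pose sq (x : 'rV[R]_n) := \sum_i x 0 i ^+ 2.
pose S := [set x : 'rV[R]_n | sq x = 1].
have sq_ge0 x : 0 <= sq x by apply: sumr_ge0 => i _; exact: sqr_ge0.
have sq0 x : sq x = 0 -> x = 0.
  move=> /psumr_eq0P H; apply/rowP => i; rewrite !mxE.
  have := H (fun j _ => sqr_ge0 (x 0 j)) i isT.
  by move/eqP; rewrite sqrf_eq0 => /eqP.
have r2v_nz x : x != 0 -> r2v x != 0.
  by apply: contra => /eqP h; apply/eqP; apply: r2v_inj; rewrite h linear0.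
have v2r_nz x : x != 0 -> v2r x != 0.
  by apply: contra => /eqP h; apply/eqP; apply: v2r_inj; rewrite h linear0.
have sq_gt0 x : x != 0 -> 0 < sq x.
  move=> xnz; rewrite lt_def sq_ge0 andbT; apply/eqP => /sq0 h.
  by rewrite h eqxx in xnz.
have scl x : x != 0 -> S ((Num.sqrt (sq x))^-1 *: x).
  move=> xnz; rewrite /S /= /sq.
  under eq_bigr do rewrite mxE exprMn.
  rewrite -mulr_sumr exprVn sqr_sqrtr ?mulVf //.
    by apply/lt0r_neq0; exact: sq_gt0.
  exact: sq_ge0.
have Sne : S !=set0 by exists ((Num.sqrt (sq (v2r w)))^-1 *: v2r w); exact/scl/v2r_nz.
have sqc : continuous sq.
  apply: rm_cont_sum => i x.
  apply: (continuousM (s := fun x : 'rV[R]_n => x 0 i) (t := fun x : 'rV[R]_n => x 0 i)).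
    exact: coord_continuous.
  exact: coord_continuous.
have Scl : closed S.
  rewrite (_ : S = sq @^-1` [set y | y = 1]) //.
  apply: preimage_closed; [move=> x _; exact: sqc | exact: closed_eq].
have Scomp : compact S.
  have Cc := @rV_compact R n (fun=> `[-1, 1]%classic) (fun=> @segment_compact R (-1) 1).
  apply: (subclosed_compact Scl Cc).
  move=> x Sx i /=; rewrite in_itv /=.
  have : x ord0 i ^+ 2 <= 1.
    rewrite -Sx /sq (bigD1 i) //= lerDl; apply: sumr_ge0 => j _; exact: sqr_ge0.
  move=> h; apply/andP; split; nra.
have Sx0 x : S x -> x != 0.
  move=> Sx; apply/eqP => h; move: Sx; rewrite /S /= h /sq big1 => [/eqP|i _].
    by rewrite eq_sym oner_eq0.
  by rewrite mxE expr0n.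
have Fc : {within S, continuous (fun x => rm_quad Q x / rm_quad P x)}.
  apply: continuous_in_subspaceT => x; rewrite inE => Sx.
  have pnz : rm_quad P x != 0.
    by rewrite -rm_pE; apply: lt0r_neq0; apply: HPpos; apply: r2v_nz; exact: Sx0.
  apply: (continuousM (s := rm_quad Q) (t := fun x => (rm_quad P x)^-1)).
    exact: rm_quad_cont.
  by apply: continuousV => //; exact: rm_quad_cont.
have [c Sc cmax] := EVT_max_rV Sne Scomp Fc.
have cnz : r2v c != 0 by apply: r2v_nz; apply: Sx0; rewrite -inE.
exists (r2v c); split => // v.
case: (eqVneq v 0) => [->|vnz].
  by rewrite rm_Q0l rm_P0l mul0r mulr0.
have xnz := v2r_nz _ _ _ vnz.
have := cmax _ (mem_set (scl _ xnz)).
rewrite /= -!rm_qE -!rm_pE linearZ /= v2rK rm_Qscale rm_Pscale.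
set s := (Num.sqrt _)^-1.
have snz : s * s != 0.
  apply: mulf_neq0; rewrite invr_eq0; apply: lt0r_neq0; rewrite sqrtr_gt0; exact: sq_gt0.
rewrite -mulf_div divff // mul1r.
have Pv := HPpos _ vnz; have P0 := HPpos _ cnz.
by rewrite ler_pdivrMr // mulrAC ler_pdivlMr.
Qed.


Lemma rayleigh_stat v0 :
  (forall v, Q v v * P v0 v0 <= Q v0 v0 * P v v) ->
  (forall x y, Q x y = Q y x) -> (forall x y, P x y = P y x) ->
  forall u, Q v0 u * P v0 v0 = Q v0 v0 * P v0 u.
Proof.
move=> H Qs Ps u; apply/eqP; rewrite -subr_eq0; apply/eqP.
suff : 2 * (Q v0 u * P v0 v0 - Q v0 v0 * P v0 u) = 0.
  by move/eqP; rewrite mulf_eq0 pnatr_eq0 /= => /eqP.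
apply: (@quad_helper _ _ (Q u u * P v0 v0 - Q v0 v0 * P u u)) => t.
have := H (t *: u + v0).
rewrite !HQl !HQr !HPl !HPr (Qs u v0) (Ps u v0) => h.
rewrite -subr_le0 in h; apply: le_trans h; rewrite le_eqVlt; apply/orP; left; apply/eqP.
ring.
Qed.

End RayleighMax.

Set Implicit Arguments.
Unset Strict Implicit.

Lemma dbl0 (V : zmodType) (x : V) : x = x + x -> x = 0.
Proof. by move=> h; apply: (addrI x); rewrite addr0 -h. Qed.

Lemma skew_helper (R : realFieldType) (a b q p r: R) :
  2 * a = p - q - r -> 2 * b = r - - q - p -> a = - b.
Proof. move=> h1 h2. lra. Qed.

Lemma torsion_helper (R : realFieldType) (a b q p r: R) :
  2 * a = p - q - r -> 2 * b = - p - r - q -> a - b - p = 0.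
Proof. move=> h1 h2. lra. Qed.

Lemma lin_helper (R : realFieldType) (a L u1 u2 P1 P2 : R) :
  2 * L = a * P1 + P2 -> 2 * u1 = P1 -> 2 * u2 = P2 -> L - (a * u1 + u2) = 0.
Proof.
move=> h h1 h2.
have : 2 * (L - (a * u1 + u2)) = 0.
  by rewrite mulrBr mulrDr mulrCA h1 h2 h; ring.
by move/eqP; rewrite mulf_eq0 pnatr_eq0 /= => /eqP.
Qed.

Lemma kd_helper (R : realFieldType) (l m p AUU AUV AVU ipUU ipUV ipVU : R) :
  (l - m) * p = - (AUU - AUV) + m * (ipUU - ipUV) ->
  - AUU + m * ipUU = - AVU + l * ipVU -> AUV = AVU -> ipVU = ipUV -> l != m -> p = ipUV.
Proof.
move=> h1 h2 h3 h4 lm.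
have : (l - m) * (p - ipUV) = 0.
  rewrite mulrBr h1 h3; rewrite h4 in h2.
  have -> : AVU = AUU - m * ipUU + l * ipUV by rewrite -[AVU]opprK -[- AVU](addrK (l * ipUV)) -h2; ring.
  ring.
by move/eqP; rewrite mulf_eq0 subr_eq0 (negbTE lm) /= subr_eq0 => /eqP.
Qed.

Lemma lift_helper (R : realFieldType) (a p q K r t : R) :
  a * p + q + K * (a * r + t) = a * (p + K * r) + (q + K * t).
Proof. ring. Qed.

Lemma bm_helper (R : realFieldType) (a X Y S1 S2 : R) :
  a * X + Y - (a * S1 + S2) = a * (X - S1) + (Y - S2).
Proof. ring. Qed.

Lemma lt_helper (R : realFieldType) (a s : R) : a <= s -> a - 1 < s.
Proof. move=> h; lra. Qed.

Lemma ov_helper (R : realFieldType) (cj K s p : R) :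
  cj * p - (cj - K) * p = s * p -> K < s -> p = 0.
Proof.
move=> h hK; have : (s - K) * p = 0.
  by rewrite mulrBl -h; ring.
by move/eqP; rewrite mulf_eq0 subr_eq0 => /orP [/eqP e|/eqP //]; rewrite e ltxx in hK.
Qed.

Lemma neg_term (R : realFieldType) (ci cj cl p t : R) : ci < cl -> cl < cj ->
  p * ((cj - cl) * (ci - cl)) = t ^+ 2 -> t != 0 -> p < 0.
Proof.
move=> h1 h2 h ht.
have q0 : (cj - cl) * (ci - cl) < 0 by rewrite pmulr_rlt0 ?subr_gt0 // subr_lt0.
have t2 : 0 < t ^+ 2 by rewrite exprn_even_gt0.
rewrite -h in t2; rewrite ltNge; apply/negP => p0.
have : p * ((cj - cl) * (ci - cl)) <= 0 by rewrite mulr_ge0_le0 // ltW.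
by rewrite leNgt t2.
Qed.
Lemma pos_term (R : realFieldType) (ci cj cl p t : R) : ci < cj -> cj < cl ->
  p * ((cj - cl) * (ci - cl)) = t ^+ 2 -> t != 0 -> 0 < p.
Proof.
move=> h1 h2 h ht.
have q0 : 0 < (cj - cl) * (ci - cl) by rewrite nmulr_rgt0 ?subr_lt0 // (lt_trans h1 h2).
have t2 : 0 < t ^+ 2 by rewrite exprn_even_gt0.
by rewrite -h pmulr_lgt0 in t2.
Qed.
Lemma sum_neg_helper (R : realFieldType) (a b : R) : a < 0 -> b <= 0 -> a + b < 0.
Proof. move=> *; lra. Qed.
Lemma sum_pos_helper (R : realFieldType) (a b : R) : 0 < a -> 0 <= b -> 0 < a + b.
Proof. move=> *; lra. Qed.

Section Alg.
Variables (R : realType) (g : vectType R)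
  (br : g -> g -> g) (ph : g -> g) (ip : g -> g -> R)
  (alpha : g -> g -> g) (A : g -> g -> R).
Hypothesis Hbr : lie_bracket br.
Hypothesis Hph : reductive_decomposition br ph.
Hypothesis Hip : invariant_inner_product br ph ip.
Hypothesis Hal : levi_civita_product br ph ip alpha.
Hypothesis HA : invariant_codazzi br ph alpha A.

Local Notation inm := (in_m ph).

Lemma ph_lin a x y : ph (a *: x + y) = a *: ph x + ph y.
Proof. by case: Hph. Qed.
Lemma ph_idem x : ph (ph x) = ph x.
Proof. by case: Hph. Qed.
Lemma ph0 : ph 0 = 0.
Proof.
by apply: dbl0; have := ph_lin 1 0 0; rewrite !scale1r addr0.
Qed.
Lemma phD x y : ph (x + y) = ph x + ph y.
Proof. by have := ph_lin 1 x y; rewrite !scale1r. Qed.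
Lemma phZ a x : ph (a *: x) = a *: ph x.
Proof. by rewrite -[a *: x]addr0 ph_lin ph0 addr0. Qed.
Lemma phN x : ph (- x) = - ph x.
Proof. by rewrite -scaleN1r phZ scaleN1r. Qed.
Lemma phB x y : ph (x - y) = ph x - ph y.
Proof. by rewrite phD phN. Qed.

Lemma inm0 : inm 0. Proof. exact: ph0. Qed.
Lemma inmD x y : inm x -> inm y -> inm (x + y).
Proof. by rewrite /in_m phD => -> ->; rewrite addr0. Qed.
Lemma inmZ a x : inm x -> inm (a *: x).
Proof. by rewrite /in_m phZ => ->; rewrite scaler0. Qed.
Lemma inmN x : inm x -> inm (- x).
Proof. by rewrite /in_m phN => ->; rewrite oppr0. Qed.
Lemma inmB x y : inm x -> inm y -> inm (x - y).
Proof. by move=> hx hy; apply: inmD => //; exact: inmN. Qed.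
Lemma inm_mpart x : inm (mpart ph x).
Proof. by rewrite /in_m /mpart phB ph_idem subrr. Qed.
Lemma inm_alpha x y : inm x -> inm y -> inm (alpha x y).
Proof. by case: Hal => H _; exact: H. Qed.
Lemma inm_sum (I : Type) (r : seq I) (a : I -> R) (v : I -> g) :
  (forall i, inm (v i)) -> inm (\sum_(i <- r) a i *: v i).
Proof.
move=> hv; apply: (big_ind (fun x => inm x)) => //.
- exact: inm0.
- exact: inmD.
- by move=> i _; apply: inmZ.
Qed.

Hint Resolve inm0 inmD inmZ inmN inmB inm_mpart inm_alpha : inmdb.

Lemma mpart_m x : inm x -> mpart ph x = x.
Proof. by rewrite /mpart => ->; rewrite subr0. Qed.
Lemma mpartD x y : mpart ph (x + y) = mpart ph x + mpart ph y.
Proof. by rewrite /mpart phD opprD addrACA. Qed.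
Lemma mpartZ a x : mpart ph (a *: x) = a *: mpart ph x.
Proof. by rewrite /mpart phZ scalerBr. Qed.
Lemma mpartN x : mpart ph (- x) = - mpart ph x.
Proof. by rewrite -scaleN1r mpartZ scaleN1r. Qed.

Lemma brDl x y z : br (x + y) z = br x z + br y z.
Proof. by case: Hbr => H _ _ _; have := H 1 x y z; rewrite !scale1r. Qed.
Lemma brDr x y z : br z (x + y) = br z x + br z y.
Proof. by case: Hbr => _ H _ _; have := H 1 x y z; rewrite !scale1r. Qed.
Lemma brZl a x z : br (a *: x) z = a *: br x z.
Proof.
case: Hbr => H _ _ _; have := H a x 0 z; rewrite addr0 => ->.
suff -> : br 0 z = 0 by rewrite addr0.
by apply: dbl0; have := H 1 0 0 z; rewrite !scale1r addr0.
Qed.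
Lemma brZr a x z : br z (a *: x) = a *: br z x.
Proof.
case: Hbr => _ H _ _; have := H a x 0 z; rewrite addr0 => ->.
suff -> : br z 0 = 0 by rewrite addr0.
by apply: dbl0; have := H 1 0 0 z; rewrite !scale1r addr0.
Qed.
Lemma br_anti x y : br y x = - br x y.
Proof.
case: Hbr => _ _ H _; have := H (x + y).
rewrite brDl !brDr H H add0r addr0 => /eqP; rewrite addr_eq0 => /eqP ->.
by rewrite opprK.
Qed.


Section Forms.
Variable B : g -> g -> R.
Hypothesis HB : bilinear_on_m ph B.

Lemma B_0l z : inm z -> B 0 z = 0.
Proof. by move=> hz; apply: dbl0; have [+ _] := HB 1 inm0 inm0 hz; rewrite scale1r addr0 mul1r. Qed.
Lemma B_0r z : inm z -> B z 0 = 0.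
Proof. by move=> hz; apply: dbl0; have [_ +] := HB 1 inm0 inm0 hz; rewrite scale1r addr0 mul1r. Qed.
Lemma B_Dl x y z : inm x -> inm y -> inm z -> B (x + y) z = B x z + B y z.
Proof. by move=> hx hy hz; have [+ _] := HB 1 hx hy hz; rewrite scale1r mul1r. Qed.
Lemma B_Dr x y z : inm x -> inm y -> inm z -> B z (x + y) = B z x + B z y.
Proof. by move=> hx hy hz; have [_ +] := HB 1 hx hy hz; rewrite scale1r mul1r. Qed.
Lemma B_Zl a x z : inm x -> inm z -> B (a *: x) z = a * B x z.
Proof. by move=> hx hz; have [+ _] := HB a hx inm0 hz; rewrite addr0 B_0l // addr0. Qed.
Lemma B_Zr a x z : inm x -> inm z -> B z (a *: x) = a * B z x.
Proof. by move=> hx hz; have [_ +] := HB a hx inm0 hz; rewrite addr0 B_0r // addr0. Qed.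
Lemma B_Nl x z : inm x -> inm z -> B (- x) z = - B x z.
Proof. by move=> hx hz; rewrite -scaleN1r B_Zl // mulN1r. Qed.
Lemma B_Nr x z : inm x -> inm z -> B z (- x) = - B z x.
Proof. by move=> hx hz; rewrite -scaleN1r B_Zr // mulN1r. Qed.
Lemma B_Bl x y z : inm x -> inm y -> inm z -> B (x - y) z = B x z - B y z.
Proof. by move=> hx hy hz; rewrite B_Dl ?B_Nl; auto with inmdb. Qed.
Lemma B_Br x y z : inm x -> inm y -> inm z -> B z (x - y) = B z x - B z y.
Proof. by move=> hx hy hz; rewrite B_Dr ?B_Nr; auto with inmdb. Qed.
Lemma B_suml (I : Type) (r : seq I) (a : I -> R) (v : I -> g) z :
  (forall i, inm (v i)) -> inm z ->
  B (\sum_(i <- r) a i *: v i) z = \sum_(i <- r) a i * B (v i) z.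
Proof.
move=> hv hz; elim: r => [|i r IH]; first by rewrite !big_nil B_0l.
by rewrite !big_cons B_Dl ?B_Zl ?IH //; auto with inmdb; apply: inm_sum.
Qed.
Lemma B_sumr (I : Type) (r : seq I) (a : I -> R) (v : I -> g) z :
  (forall i, inm (v i)) -> inm z ->
  B z (\sum_(i <- r) a i *: v i) = \sum_(i <- r) a i * B z (v i).
Proof.
move=> hv hz; elim: r => [|i r IH]; first by rewrite !big_nil B_0r.
by rewrite !big_cons B_Dr ?B_Zr ?IH //; auto with inmdb; apply: inm_sum.
Qed.
End Forms.

Lemma ip_bil : bilinear_on_m ph ip. Proof. by case: Hip. Qed.
Lemma ip_sym x y : inm x -> inm y -> ip x y = ip y x.
Proof. by case: Hip => _ H _ _; exact: H. Qed.
Lemma ip_pos x : inm x -> x != 0 -> 0 < ip x x.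
Proof. by case: Hip => _ _ H _; exact: H. Qed.
Lemma A_bil : bilinear_on_m ph A. Proof. by case: HA. Qed.
Lemma A_sym x y : inm x -> inm y -> A x y = A y x.
Proof. by case: HA => _ H _ _; exact: H. Qed.
Lemma codazzi X Y Z : inm X -> inm Y -> inm Z ->
  nablaA alpha A X Y Z = nablaA alpha A Y X Z.
Proof. by case: HA => _ _ _ H; exact: H. Qed.

Lemma nondeg d : inm d -> (forall Z, inm Z -> ip d Z = 0) -> d = 0.
Proof.
move=> hd H; case: (eqVneq d 0) => // dnz.
by have := ip_pos hd dnz; rewrite H // ltxx.
Qed.

Lemma LC X Y Z : inm X -> inm Y -> inm Z ->
  2 * ip (alpha X Y) Z =
       ip (mpart ph (br X Y)) Z - ip X (mpart ph (br Y Z))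
       - ip (mpart ph (br X Z)) Y.
Proof. by case: Hal => _ H; exact: H. Qed.

Lemma mpart_anti x y : mpart ph (br y x) = - mpart ph (br x y).
Proof. by rewrite br_anti mpartN. Qed.

Lemma al_skew X Y Z : inm X -> inm Y -> inm Z ->
  ip (alpha X Y) Z = - ip Y (alpha X Z).
Proof.
move=> hX hY hZ.
have h1 := LC hX hY hZ; have h2 := LC hX hZ hY.
rewrite [mpart ph (br Z Y)]mpart_anti (B_Nr ip_bil) ?(ip_sym (inm_alpha hX hZ)) in h2; auto with inmdb.
exact: skew_helper h1 h2.
Qed.

Lemma torsion X Y : inm X -> inm Y ->
  alpha X Y - alpha Y X = mpart ph (br X Y).
Proof.
move=> hX hY; apply/eqP; rewrite -subr_eq0; apply/eqP.
apply: nondeg; first by auto with inmdb.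
move=> Z hZ; rewrite (B_Bl ip_bil) 1?[ip (alpha X Y - _) Z](B_Bl ip_bil); auto with inmdb.
have h1 := LC hX hY hZ; have h2 := LC hY hX hZ.
rewrite [mpart ph (br Y X)]mpart_anti (B_Nl ip_bil) in h2; auto with inmdb.
rewrite (ip_sym hY) ?(ip_sym _ hX) in h2; auto with inmdb.
exact: torsion_helper h1 h2.
Qed.



Lemma al_linr X a Y Y' : inm X -> inm Y -> inm Y' ->
  alpha X (a *: Y + Y') = a *: alpha X Y + alpha X Y'.
Proof.
move=> hX hY hY'; apply/eqP; rewrite -subr_eq0; apply/eqP.
apply: nondeg; first by auto with inmdb.
move=> Z hZ; rewrite (B_Bl ip_bil) ?(B_Dl ip_bil) ?(B_Zl ip_bil); auto with inmdb.
apply: (lin_helper (P1 := ip (mpart ph (br X Y)) Z - ip X (mpart ph (br Y Z))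
       - ip (mpart ph (br X Z)) Y) (P2 := ip (mpart ph (br X Y')) Z - ip X (mpart ph (br Y' Z))
       - ip (mpart ph (br X Z)) Y')); last 2 first.
- exact: LC.
- exact: LC.
rewrite LC; auto with inmdb.
rewrite brDr brZr mpartD mpartZ brDl brZl mpartD mpartZ.
rewrite [ip (a *: _ + _) Z](B_Dl ip_bil) ?[ip (a *: _) Z](B_Zl ip_bil); auto with inmdb.
rewrite [ip X (a *: _ + _)](B_Dr ip_bil) ?[ip X (a *: _)](B_Zr ip_bil); auto with inmdb.
rewrite [ip _ (a *: Y + Y')](B_Dr ip_bil) ?[ip _ (a *: Y)](B_Zr ip_bil); auto with inmdb.
ring.
Qed.


Definition eig c X := inm X /\ forall W, inm W -> A X W = c * ip X W.
Local Notation T := (nablaA alpha A).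

Lemma T_sym23 X Y Z : inm X -> inm Y -> inm Z -> T X Y Z = T X Z Y.
Proof.
move=> hX hY hZ; rewrite /nablaA (A_sym (inm_alpha hX hY) hZ).
by rewrite (A_sym hY (inm_alpha hX hZ)) addrC.
Qed.

Lemma T_eig l m X Y W : eig l X -> eig m Y -> inm W ->
  T X Y W = - A (alpha X Y) W + m * ip (alpha X Y) W.
Proof.
move=> [hX eX] [hY eY] hW; rewrite /nablaA eY; auto with inmdb.
by rewrite (al_skew hX hY hW) mulrN.
Qed.

Lemma T_same l X Y W : eig l X -> eig l Y -> inm W -> T X Y W = 0.
Proof.
move=> [hX eX] [hY eY] hW.
rewrite T_sym23 // codazzi // /nablaA.
rewrite (A_sym (inm_alpha hW hX) hY) eY ?eX; auto with inmdb.
rewrite (ip_sym hX (inm_alpha hW hY)) (al_skew hW hY hX).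
by rewrite mulrN opprK addrC subrr.
Qed.

Lemma eig_aXX l X : eig l X -> forall W, inm W ->
  A (alpha X X) W = l * ip (alpha X X) W.
Proof.
move=> eX W hW; have := T_same eX eX hW; rewrite (T_eig eX eX hW).
by move/eqP; rewrite addrC subr_eq0 => /eqP.
Qed.

Lemma orth l m a b : inm a -> inm b ->
  (forall W, inm W -> A a W = l * ip a W) ->
  (forall W, inm W -> A b W = m * ip b W) -> l != m -> ip a b = 0.
Proof.
move=> ha hb ea eb lm.
have : (l - m) * ip a b = 0.
  by rewrite mulrBl -ea // A_sym // eb // ip_sym // subrr.
by move/eqP; rewrite mulf_eq0 subr_eq0 (negbTE lm) /= => /eqP.
Qed.

Lemma E1 l m X Y W : eig l X -> eig m Y -> inm W ->
  - A (alpha X Y) W + m * ip (alpha X Y) W =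
  - A (alpha Y X) W + l * ip (alpha Y X) W.
Proof.
move=> eX eY hW; rewrite -(T_eig eX eY hW) -(T_eig eY eX hW).
by case: eX => hX _; case: eY => hY _; rewrite codazzi.
Qed.


Lemma Kd_formula l m X Y : eig l X -> eig m Y -> l != m ->
  Kd br ph ip alpha X Y = 2 * ip (alpha X Y) (alpha Y X).
Proof.
move=> eX eY lm; have [hX eXf] := eX; have [hY eYf] := eY.
set U := alpha X Y; set V := alpha Y X; set D := mpart ph (br X Y).
have hU : inm U by exact: inm_alpha.
have hV : inm V by exact: inm_alpha.
have hD : inm D by exact: inm_mpart.
have tor : D = U - V by rewrite /D -torsion.
rewrite /Kd /Rd -/D (B_Bl ip_bil) ?[ip (alpha X _ - _) X](B_Bl ip_bil); auto with inmdb.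
rewrite (al_skew hX (inm_alpha hY hY) hX) (al_skew hY hU hX) (al_skew hD hY hX).
have o : ip (alpha Y Y) (alpha X X) = 0.
  apply: (orth (l := m) (m := l)); auto with inmdb.
  - exact: eig_aXX.
  - exact: eig_aXX.
  by rewrite eq_sym.
have e1 : T D X Y = (l - m) * ip Y (alpha D X).
  rewrite /nablaA (A_sym (inm_alpha hD hX) hY) eYf ?eXf; auto with inmdb.
  rewrite (ip_sym hX (inm_alpha hD hY)) (al_skew hD hY hX); ring.
have e2 : T D X Y = T X Y D by rewrite codazzi // T_sym23.
have e3 := T_eig eX eY hD.
have e4 := E1 eX eY hU.
rewrite -/U -/V in e3 e4.
rewrite e2 e3 in e1; rewrite [D in A U D]tor [D in ip U D]tor in e1.
rewrite (B_Br A_bil) ?(B_Br ip_bil) in e1; auto with inmdb.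
have p := kd_helper (esym e1) e4 (A_sym hU hV) (ip_sym hV hU) lm.
rewrite o p; ring.
Qed.


Definition OE k (e : nat -> g) (c : nat -> R) :=
  (forall i, (i < k)%N -> eig (c i) (e i)) /\
  (forall i j, (i < k)%N -> (j < k)%N -> ip (e i) (e j) = (i == j)%:R).

Definition proj k (e : nat -> g) x := x - \sum_(i < k) ip x (e i) *: e i.

Lemma sum_delta k (f : 'I_k -> R) j (hj : (j < k)%N) :
  \sum_(i < k) f i * ((i : nat) == j)%:R = f (Ordinal hj).
Proof.
rewrite (bigD1 (Ordinal hj)) //= eqxx mulr1 big1 ?addr0 // => i.
by rewrite -val_eqE /= => /negbTE ->; rewrite mulr0.
Qed.

Lemma OE_inm k e c i : OE k e c -> (i < k)%N -> inm (e i).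
Proof. by move=> [H _] hi; case: (H i hi). Qed.

Lemma proj_inm k e c x : OE k e c -> inm x -> inm (proj k e x).
Proof.
move=> oe hx; apply: inmB => //; apply: inm_sum => i.
exact: OE_inm oe (ltn_ord i).
Qed.

Lemma proj_orth k e c x j : OE k e c -> inm x -> (j < k)%N ->
  ip (proj k e x) (e j) = 0.
Proof.
move=> oe hx hj; have hei : forall i : 'I_k, inm (e i) by move=> i; exact: OE_inm oe (ltn_ord i).
have hej := OE_inm oe hj.
rewrite /proj (B_Bl ip_bil) //; last by apply: inm_sum.
rewrite (B_suml ip_bil) //.
under eq_bigr => i _ do rewrite (proj2 oe) //.
by rewrite sum_delta subrr.
Qed.

Definition Ec (u v : g) : R := \sum_i (v2r u) 0 i * (v2r v) 0 i.

Lemma Ec_l a x y z : Ec (a *: x + y) z = a * Ec x z + Ec y z.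
Proof.
rewrite /Ec linearP mulr_sumr -big_split; apply: eq_bigr => i _.
by rewrite !mxE mulrDl mulrA.
Qed.
Lemma Ec_sym x y : Ec x y = Ec y x.
Proof. by rewrite /Ec; apply: eq_bigr => i _; rewrite mulrC. Qed.
Lemma Ec_ge0 z : 0 <= Ec z z.
Proof. by apply: sumr_ge0 => i _; rewrite -expr2 sqr_ge0. Qed.
Lemma Ec_eq0 z : Ec z z = 0 -> z = 0.
Proof.
move=> /psumr_eq0P H; apply: v2r_inj; rewrite linear0; apply/rowP => i; rewrite !mxE.
have sq j : 0 <= v2r z 0 j * v2r z 0 j by rewrite -expr2 sqr_ge0.
have := H (fun j _ => sq j) i isT.
by move/eqP; rewrite -expr2 sqrf_eq0 => /eqP.
Qed.
Lemma Ec_0l z : Ec 0 z = 0.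
Proof. by rewrite /Ec big1 // => i _; rewrite linear0 mxE mul0r. Qed.

Definition Lift (F : g -> g -> R) (K : R) u v :=
  F (mpart ph u) (mpart ph v) + K * Ec (ph u) (ph v).

Lemma Lift_l F K a x y z : bilinear_on_m ph F ->
  Lift F K (a *: x + y) z = a * Lift F K x z + Lift F K y z.
Proof.
move=> HF; rewrite /Lift mpartD mpartZ ph_lin Ec_l.
have [-> _] := HF a _ _ _ (inm_mpart x) (inm_mpart y) (inm_mpart z).
exact: lift_helper.
Qed.
Lemma Lift_sym F K x y : symmetric_on_m ph F -> Lift F K x y = Lift F K y x.
Proof. by move=> HF; rewrite /Lift HF 1?[Ec (ph x) _]Ec_sym //; exact: inm_mpart. Qed.
Lemma Lift_r F K a x y z : bilinear_on_m ph F -> symmetric_on_m ph F ->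
  Lift F K z (a *: x + y) = a * Lift F K z x + Lift F K z y.
Proof. by move=> HF HS; rewrite !(Lift_sym K z _ HS) Lift_l. Qed.

Lemma ip_ge0 x : inm x -> 0 <= ip x x.
Proof.
move=> hx; case: (eqVneq x 0) => [->|xnz]; first by rewrite (B_0l ip_bil inm0).
by apply: ltW; exact: ip_pos.
Qed.


Lemma Lift_pos v : v != 0 -> 0 < Lift ip 1 v v.
Proof.
move=> vnz; rewrite /Lift mul1r.
have h1 := ip_ge0 (inm_mpart v); have h2 := Ec_ge0 (ph v).
rewrite lt_def addr_ge0 // andbT; apply/eqP => e.
move/eqP: e; rewrite paddr_eq0 // => /andP [/eqP e1 /eqP /Ec_eq0 e2].
have h3 : mpart ph v = 0.
  case: (eqVneq (mpart ph v) 0) => // nz.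
  by have := ip_pos (inm_mpart v) nz; rewrite e1 ltxx.
move/eqP: vnz; apply; by rewrite -(subrK (ph v) v) -/(mpart ph v) h3 e2 addr0.
Qed.

Lemma ip_symm : symmetric_on_m ph ip. Proof. by case: Hip. Qed.

Definition Bm k (e : nat -> g) (c : nat -> R) (K : R) u v :=
  A u v - \sum_(i < k) (c i - K) * (ip u (e i) * ip v (e i)).

Lemma Bm_sym k e c K : OE k e c -> symmetric_on_m ph (Bm k e c K).
Proof.
move=> oe x y hx hy; rewrite /Bm A_sym //; congr (_ - _).
by apply: eq_bigr => i _; rewrite [ip x _ * _]mulrC.
Qed.

Lemma Bm_bil k e c K : OE k e c -> bilinear_on_m ph (Bm k e c K).
Proof.
move=> oe.
have hei : forall i : 'I_k, inm (e i) by move=> i; exact: OE_inm oe (ltn_ord i).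
have H1 : forall a x y z, inm x -> inm y -> inm z ->
    Bm k e c K (a *: x + y) z = a * Bm k e c K x z + Bm k e c K y z.
  move=> a x y z hx hy hz; rewrite /Bm; have [-> _] := A_bil a hx hy hz.
  under eq_bigr => i _ do rewrite (proj1 (ip_bil a hx hy (hei i))).
  have -> : \sum_(i < k) (c i - K) * ((a * ip x (e i) + ip y (e i)) * ip z (e i)) =
     a * \sum_(i < k) (c i - K) * (ip x (e i) * ip z (e i)) +
     \sum_(i < k) (c i - K) * (ip y (e i) * ip z (e i)).
    by rewrite mulr_sumr -big_split; apply: eq_bigr => i _ /=; ring.
  exact: bm_helper.
move=> a x y z hx hy hz; split; first exact: H1.
rewrite (Bm_sym K oe hz (inmD (inmZ a hx) hy)) H1 //.
by rewrite (Bm_sym K oe hx hz) (Bm_sym K oe hy hz).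
Qed.

Lemma ext k e c : OE k e c -> (exists x, inm x /\ proj k e x != 0) ->
  exists c' e', [/\ eig c' e', ip e' e' = 1 & forall j, (j < k)%N -> ip (e j) e' = 0].
Proof.
move=> oe [x [hx pnz]].
have hei : forall i : 'I_k, inm (e i) by move=> i; exact: OE_inm oe (ltn_ord i).
set w0 := proj k e x.
have hw0 : inm w0 := proj_inm oe hx.
have ow0 : forall j, (j < k)%N -> ip w0 (e j) = 0 by move=> j hj; exact: proj_orth oe hx hj.
have ipw0 := ip_pos hw0 pnz.
set K := A w0 w0 / ip w0 w0 - 1.
set Q := Lift (Bm k e c K) K; set P := Lift ip 1.
have HQl a x1 y z : Q (a *: x1 + y) z = a * Q x1 z + Q y z := Lift_l K a x1 y z (Bm_bil K oe).
have HQr a x1 y z : Q z (a *: x1 + y) = a * Q z x1 + Q z y :=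
  Lift_r K a x1 y z (Bm_bil K oe) (Bm_sym K oe).
have HPl a x1 y z : P (a *: x1 + y) z = a * P x1 z + P y z := Lift_l 1 a x1 y z ip_bil.
have HPr a x1 y z : P z (a *: x1 + y) = a * P z x1 + P z y := Lift_r 1 a x1 y z ip_bil ip_symm.
have [v0 [v0nz vmax]] := @rayleigh_max R g Q P HQl HQr HPl HPr Lift_pos (ex_intro _ w0 pnz).
have Qs x1 y : Q x1 y = Q y x1 := Lift_sym K x1 y (Bm_sym K oe).
have Ps x1 y : P x1 y = P y x1 := Lift_sym 1 x1 y ip_symm.
have stat := @rayleigh_stat R g Q P HQl HQr HPl HPr v0 vmax Qs Ps.
have P0pos : 0 < P v0 v0 := Lift_pos v0nz.
set s := Q v0 v0 / P v0 v0.
have st u : Q v0 u = s * P v0 u.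
  by rewrite /s mulrAC -(stat u) mulfK // lt0r_neq0.
have Qw0 : Q w0 w0 = A w0 w0.
  rewrite /Q /Lift mpart_m // hw0 Ec_0l mulr0 addr0 /Bm big1 ?subr0 // => i _.
  by rewrite (ow0 _ (ltn_ord i)) mul0r mulr0.
have Pw0 : P w0 w0 = ip w0 w0.
  by rewrite /P /Lift mpart_m // hw0 Ec_0l mulr0 addr0.
have sK : K < s.
  have := vmax w0; rewrite Qw0 Pw0 => h.
  apply: lt_helper; rewrite /s ler_pdivlMr // mulrAC ler_pdivrMr //.
have z0 : ph v0 = 0.
  have := st (ph v0).
  have m0 : mpart ph (ph v0) = 0 by rewrite /mpart ph_idem subrr.
  rewrite /Q /P /Lift m0 ph_idem (B_0r ip_bil (inm_mpart v0)) mul1r add0r.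
  have -> : Bm k e c K (mpart ph v0) 0 = 0.
    rewrite /Bm (B_0r A_bil (inm_mpart v0)) big1 ?subr0 // => i _.
    by rewrite (B_0l ip_bil (hei i)) !mulr0.
  rewrite add0r => h.
  have : (s - K) * Ec (ph v0) (ph v0) = 0 by rewrite mulrBl -h subrr.
  move/eqP; rewrite mulf_eq0 subr_eq0 => /orP [/eqP sk|/eqP /Ec_eq0 //].
  by rewrite sk ltxx in sK.
have hv0 : inm v0 := z0.
have mv0 : mpart ph v0 = v0 := mpart_m hv0.
have eqB u : inm u -> Bm k e c K v0 u = s * ip v0 u.
  move=> hu; have := st u.
  by rewrite /Q /P /Lift mv0 mpart_m // z0 hu Ec_0l !mulr0 !addr0.
have ov j : (j < k)%N -> ip v0 (e j) = 0.
  move=> hj; have hej := OE_inm oe hj; have := eqB _ hej.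
  rewrite /Bm (A_sym hv0 hej) (proj2 (proj1 oe j hj)) // (ip_sym hej hv0).
  under eq_bigr => i _ do rewrite (proj2 oe j i hj (ltn_ord i)) eq_sym mulrA.
  rewrite sum_delta /= => h; exact: ov_helper h sK.
have eigv u : inm u -> A v0 u = s * ip v0 u.
  move=> hu; rewrite -eqB // /Bm big1 ?subr0 // => i _.
  by rewrite (ov _ (ltn_ord i)) mul0r mulr0.
have ipv0 := ip_pos hv0 v0nz.
set r := (Num.sqrt (ip v0 v0))^-1.
exists s, (r *: v0); split.
- split; first exact: inmZ.
  move=> u hu; rewrite (B_Zl A_bil) // (B_Zl ip_bil) // eigv //.
  by rewrite mulrCA.
- rewrite (B_Zl ip_bil) ?(B_Zr ip_bil) //; auto with inmdb.
  rewrite mulrA -expr2 /r exprVn sqr_sqrtr ?mulVf //; last exact: ltW.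
  exact: lt0r_neq0.
- move=> j hj; have hej := OE_inm oe hj.
  by rewrite (B_Zr ip_bil) // (ip_sym hej hv0) ov // mulr0.
Qed.

Fixpoint elist (e : nat -> g) k : seq g :=
  if k is k'.+1 then e k' :: elist e k' else [::].

Lemma size_elist e k : size (elist e k) = k.
Proof. by elim: k => //= k ->. Qed.

Lemma elist_span K e c : OE K e c -> forall k, (k <= K)%N ->
  forall v, v \in <<elist e k>>%VS ->
  forall j, (k <= j)%N -> (j < K)%N -> ip (mpart ph v) (e j) = 0.
Proof.
move=> oe; elim=> [|k IH] hk v.
  rewrite /= span_nil memv0 => /eqP -> j _ hj.
  have -> : mpart ph 0 = 0 by rewrite /mpart ph0 subrr.
  exact: (B_0l ip_bil (OE_inm oe hj)).
rewrite /= span_cons => /memv_addP [u /vlineP [t ->] [w hw ->]] j hkj hj.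
have hkK : (k < K)%N by apply: leq_trans hk.
have hek := OE_inm oe hkK; have hej := OE_inm oe hj.
rewrite mpartD mpartZ mpart_m // (B_Dl ip_bil) ?(B_Zl ip_bil) //; auto with inmdb.
rewrite (proj2 oe k j hkK hj) IH //; last exact: ltnW.
  have -> : (k == j) = false by apply/negbTE; rewrite neq_ltn hkj.
  by rewrite mulr0 addr0.
exact: ltnW.
Qed.

Lemma elist_free K e c : OE K e c -> forall k, (k <= K)%N -> free (elist e k).
Proof.
move=> oe; elim=> [|k IH] hk; first by rewrite /= nil_free.
have hkK : (k < K)%N by apply: leq_trans hk.
rewrite /= free_cons IH ?andbT; last exact: ltnW.
apply/negP => hin.
have := elist_span oe (ltnW hkK) hin (leqnn k) hkK.
rewrite mpart_m; last exact: OE_inm oe hkK.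
by rewrite (proj2 oe k k hkK hkK) eqxx => /eqP; rewrite oner_eq0.
Qed.

Lemma OE_bound K e c : OE K e c -> (K <= dim g)%N.
Proof.
move=> oe; have := elist_free oe (leqnn K).
rewrite /free size_elist => /eqP <-.
by rewrite -dimvf; apply: dimvS; exact: subvf.
Qed.

Lemma OE_ext k e c c' e' : OE k e c -> eig c' e' -> ip e' e' = 1 ->
  (forall j, (j < k)%N -> ip (e j) e' = 0) ->
  OE k.+1 (fun i => if i == k then e' else e i) (fun i => if i == k then c' else c i).
Proof.
move=> oe eg n1 o.
have lt_k i : (i < k.+1)%N -> i != k -> (i < k)%N.
  by move=> hi ne; rewrite ltn_neqAle ne -ltnS.
split.
  move=> i hi /=; case: (eqVneq i k) => [_|ne]; first done.
  by apply: (proj1 oe); exact: lt_k.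
move=> i j hi hj /=; case: (eqVneq i k) => [->|nei].
  case: (eqVneq j k) => [_|nej]; first by rewrite n1.
  have hj' := lt_k _ hj nej.
  by rewrite (ip_sym (proj1 eg) (OE_inm oe hj')) o.
case: (eqVneq j k) => [->|nej].
  have hi' := lt_k _ hi nei.
  by rewrite o // (negbTE nei).
exact: (proj2 oe i j (lt_k _ hi nei) (lt_k _ hj nej)).
Qed.

Lemma full_basis : exists k e c, OE k e c /\ forall x, inm x -> proj k e x = 0.
Proof.
suff H : forall N k e c, OE k e c -> (dim g - k <= N)%N ->
    exists k' e' c', OE k' e' c' /\ forall x, inm x -> proj k' e' x = 0.
  apply: (H (dim g) 0 (fun=> 0) (fun=> 0)); last by rewrite subn0.
  by split=> i.
elim=> [|N IH] k e c oe hN.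
  case: (pselect (exists x, inm x /\ proj k e x != 0)) => [ex|nex].
    have [c' [e' [eg n1 o]]] := ext oe ex.
    have := OE_bound (OE_ext oe eg n1 o).
    by rewrite -subn_gt0 (leq_gtF _) // leqNgt; move: hN; rewrite leqn0 subn_eq0 => /leq_ltn_trans H /H; rewrite ltnn.
  exists k, e, c; split => // x hx.
  case: (eqVneq (proj k e x) 0) => // nz; exfalso; apply: nex; by exists x.
case: (pselect (exists x, inm x /\ proj k e x != 0)) => [ex|nex].
  have [c' [e' [eg n1 o]]] := ext oe ex.
  have oe2 := OE_ext oe eg n1 o.
  apply: (IH _ _ _ oe2).
  have := OE_bound oe2; move: hN.
  by rewrite subnS => h1 h2; rewrite -ltnS (leq_trans _ h1) // prednK // subn_gt0.
exists k, e, c; split => // x hx.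
case: (eqVneq (proj k e x) 0) => // nz; exfalso; apply: nex; by exists x.
Qed.

Lemma al_0r X : inm X -> alpha X 0 = 0.
Proof. by move=> hX; apply: dbl0; have := al_linr 1 hX inm0 inm0; rewrite !scale1r addr0. Qed.

Lemma al_sumr (I : Type) (r : seq I) (a : I -> R) (v : I -> g) X :
  inm X -> (forall i, inm (v i)) ->
  alpha X (\sum_(i <- r) a i *: v i) = \sum_(i <- r) a i *: alpha X (v i).
Proof.
move=> hX hv; elim: r => [|i r IH]; first by rewrite !big_nil al_0r.
by rewrite !big_cons al_linr ?IH //; apply: inm_sum.
Qed.

Lemma T3_sum (I : Type) (r : seq I) (a : I -> R) (v : I -> g) X Y :
  inm X -> inm Y -> (forall i, inm (v i)) ->
  T X Y (\sum_(i <- r) a i *: v i) = \sum_(i <- r) a i * T X Y (v i).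
Proof.
move=> hX hY hv; rewrite /nablaA al_sumr // !(B_sumr A_bil); try by auto with inmdb.
rewrite -!sumrN -big_split; apply: eq_bigr => i _ /=; ring.
Qed.

Lemma sum_nz (I : Type) (r : seq I) (a f : I -> R) :
  \sum_(i <- r) a i * f i != 0 -> exists i, f i != 0.
Proof.
move=> H; case: (pselect (exists i, f i != 0)) => // nex; exfalso.
move/eqP: H; apply; rewrite big1 // => i _.
case: (eqVneq (f i) 0) => [->|h]; first by rewrite mulr0.
by exfalso; apply: nex; exists i.
Qed.

Lemma T_cyc X Y Z : inm X -> inm Y -> inm Z -> T X Y Z = T Z X Y.
Proof. by move=> hX hY hZ; rewrite T_sym23 // codazzi. Qed.

Lemma term_facts (ci cj cl u v t : R) : ci != cj ->
  (cj - cl) * u = t -> (ci - cl) * v = t ->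
  (t = 0 -> u * v = 0) /\ u * v * ((cj - cl) * (ci - cl)) = t ^+ 2.
Proof.
move=> nij hu hv; split; first last.
  have -> : t ^+ 2 = ((cj - cl) * u) * ((ci - cl) * v) by rewrite hu hv expr2.
  ring.
move=> t0; rewrite t0 in hu hv.
case: (eqVneq cl cj) => [e|ne].
  have nz : (ci - cl) != 0 by rewrite subr_eq0 e.
  by move/eqP: hv; rewrite mulf_eq0 (negbTE nz) /= => /eqP ->; rewrite mulr0.
have nz : (cj - cl) != 0 by rewrite subr_eq0 eq_sym.
by move/eqP: hu; rewrite mulf_eq0 (negbTE nz) /= => /eqP ->; rewrite mul0r.
Qed.

Lemma main_thm : nablaA_nonzero ph alpha A ->
  (exists X Y, orthonormal_pair ph ip X Y /\ 0 < Kd br ph ip alpha X Y) /\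
  (exists X Y, orthonormal_pair ph ip X Y /\ Kd br ph ip alpha X Y < 0).
Proof.
move=> [X0 [Y0 [Z0 [hX0 hY0 hZ0 nz]]]].
have [k [e [c [oe sp]]]] := full_basis.
have hei : forall i : 'I_k, inm (e i) by move=> i; exact: OE_inm oe (ltn_ord i).
have eigi : forall i : 'I_k, eig (c i) (e i) by move=> i; exact: (proj1 oe) _ (ltn_ord i).
have orthi : forall i j : 'I_k, ip (e i) (e j) = ((i : nat) == j)%:R.
  by move=> i j; rewrite (proj2 oe).
have expand x : inm x -> x = \sum_(i < k) ip x (e i) *: e i.
  by move=> hx; have := sp x hx; rewrite /proj => /eqP; rewrite subr_eq0 => /eqP.
pose tau (i j l : 'I_k) := T (e i) (e j) (e l).
have tau_nz : exists t : 'I_k * 'I_k * 'I_k, tau t.1.1 t.1.2 t.2 != 0.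
  have h1 : T X0 Y0 Z0 != 0 := nz.
  rewrite (expand Z0 hZ0) T3_sum // in h1.
  have [l hl] := sum_nz h1.
  rewrite T_cyc // (expand Y0 hY0) T3_sum // in hl.
  have [j hj] := sum_nz hl.
  rewrite T_cyc // (expand X0 hX0) T3_sum // in hj.
  have [i hi] := sum_nz hj.
  by exists (j, l, i).
have tau_sym1 i j l : tau i j l = tau j i l by rewrite /tau codazzi.
have tau_sym2 i j l : tau i j l = tau i l j by rewrite /tau T_sym23.
have tau_dist i j l : tau i j l != 0 -> c i != c j.
  move=> h; apply: contra h => /eqP cij; apply/eqP.
  apply: (T_same (eigi i)) => //; rewrite cij; exact: eigi.
have KdE (i j : 'I_k) : c i != c j -> Kd br ph ip alpha (e i) (e j) =
    2 * \sum_(l < k) ip (alpha (e i) (e j)) (e l) * ip (alpha (e j) (e i)) (e l).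
  move=> cij; rewrite (Kd_formula (eigi i) (eigi j) cij); congr (_ * _).
  have hU := inm_alpha (hei i) (hei j); have hV := inm_alpha (hei j) (hei i).
  rewrite [X in ip X _](expand _ hU) (B_suml ip_bil) //.
  by apply: eq_bigr => l _; rewrite (ip_sym (hei l) hV).
have TF (i j l : 'I_k) : c i != c j ->
   (tau i j l = 0 -> ip (alpha (e i) (e j)) (e l) * ip (alpha (e j) (e i)) (e l) = 0) /\
   ip (alpha (e i) (e j)) (e l) * ip (alpha (e j) (e i)) (e l) * ((c j - c l) * (c i - c l))
     = (tau i j l) ^+ 2.
  move=> cij; apply: term_facts cij _ _.
  - rewrite /tau (T_eig (eigi i) (eigi j) (hei l)).
    rewrite (A_sym (inm_alpha (hei i) (hei j)) (hei l)) (proj2 (eigi l)); last exact: inm_alpha.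
    by rewrite (ip_sym (hei l)); [ring | exact: inm_alpha].
  - rewrite /tau (T_eig (eigi i) (eigi j) (hei l)) (E1 (eigi i) (eigi j) (hei l)).
    rewrite (A_sym (inm_alpha (hei j) (hei i)) (hei l)) (proj2 (eigi l)); last exact: inm_alpha.
    by rewrite (ip_sym (hei l)); [ring | exact: inm_alpha].
pose S := [pred t : 'I_k * 'I_k * 'I_k | tau t.1.1 t.1.2 t.2 != 0].
have [t0 St0] := tau_nz.
have [t1 St1 t1min] := @fin_min R _ S (fun t => c t.1.1) t0 St0.
set i := t1.1.1.
have cmin j l : tau i j l != 0 -> c i < c l.
  move=> h; rewrite lt_def; apply/andP; split.
    rewrite eq_sym; apply: (tau_dist i l j); by rewrite -tau_sym2.
  by apply: (t1min (l, i, j)); rewrite /S /= tau_sym1 -tau_sym2.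
have cmin2 j l : tau i j l != 0 -> c i < c j.
  by move=> h; apply: (cmin l j); rewrite -tau_sym2.
pose Pj := [pred j : 'I_k | [exists d, tau i j d != 0]].
have Pj0 : Pj t1.1.2 by apply/existsP; exists t1.2.
have ij_ne (j : 'I_k) : c i != c j -> ((i : nat) == j) = false.
  by move=> h; apply/negbTE; apply: contra h => /eqP -> .
have onp (j : 'I_k) : c i != c j -> orthonormal_pair ph ip (e i) (e j).
  move=> h; split; try exact: hei.
  - by rewrite orthi eqxx.
  - by rewrite orthi eqxx.
  - by rewrite orthi ij_ne.
split.
- have [jm Pjm jmmin] := @fin_min R _ Pj c _ Pj0.
  have [d0 hd0] := existsP Pjm.
  have cij : c i != c jm := tau_dist _ _ _ hd0.
  exists (e i), (e jm); split; first exact: onp.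
  rewrite KdE // pmulr_rgt0 // (bigD1 d0) //=.
  have gen l : tau i jm l != 0 -> 0 < ip (alpha (e i) (e jm)) (e l) * ip (alpha (e jm) (e i)) (e l).
    move=> h; have [_ F] := TF i jm l cij.
    apply: (pos_term _ _ F h); first exact: cmin2 h.
    rewrite lt_def; apply/andP; split.
      rewrite eq_sym; apply: (tau_dist jm l i); rewrite -tau_sym2 -tau_sym1 //.
    by apply: jmmin; apply/existsP; exists jm; rewrite -tau_sym2.
  apply: sum_pos_helper; first exact: gen.
  apply: sumr_ge0 => l _; case: (eqVneq (tau i jm l) 0) => [h|h].
    by have [F _] := TF i jm l cij; rewrite F.
  exact/ltW/gen.
- have [jM PjM jMmax] := @fin_max R _ Pj c _ Pj0.
  have [d0 hd0] := existsP PjM.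
  have cij : c i != c jM := tau_dist _ _ _ hd0.
  exists (e i), (e jM); split; first exact: onp.
  rewrite KdE // pmulr_rlt0 // (bigD1 d0) //=.
  have gen l : tau i jM l != 0 -> ip (alpha (e i) (e jM)) (e l) * ip (alpha (e jM) (e i)) (e l) < 0.
    move=> h; have [_ F] := TF i jM l cij.
    apply: (neg_term _ _ F h); first exact: cmin h.
    rewrite lt_def; apply/andP; split.
      apply: (tau_dist jM l i); rewrite -tau_sym2 -tau_sym1 //.
    by apply: jMmax; apply/existsP; exists jM; rewrite -tau_sym2.
  apply: sum_neg_helper; first exact: gen.
  apply: sumr_le0 => l _; case: (eqVneq (tau i jM l) 0) => [h|h].
    by have [F _] := TF i jM l cij; rewrite F.
  exact/ltW/gen.
Qed.

End Alg.

Unset Implicit Arguments.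
Local Open Scope ring_scope.

Theorem proposition3p1 (R : realType) (g : vectType R)
  (br : g -> g -> g) (ph : g -> g) (ip : g -> g -> R)
  (alpha : g -> g -> g) (A : g -> g -> R) :
  lie_bracket br ->
  reductive_decomposition br ph ->
  invariant_inner_product br ph ip ->
  levi_civita_product br ph ip alpha ->
  invariant_codazzi br ph alpha A ->
  nablaA_nonzero ph alpha A ->
  (exists X Y, orthonormal_pair ph ip X Y /\ 0 < Kd br ph ip alpha X Y) /\
  (exists X Y, orthonormal_pair ph ip X Y /\ Kd br ph ip alpha X Y < 0).
Proof.
move=> H1 H2 H3 H4 H5 H6.
exact: (main_thm H1 H2 H3 H4 H5 H6).
Qed.
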